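(* Let $f:[-1,1]\to\mathbb{R}$, $\epsilon_0>0$, and let $P_k:[-1,1]\to\mathbb{C}$ be a degree-$k$ polynomial with $\max_{x\in[-1,1]}|f(x)-P_k(x)|\le\epsilon_0$. Let $\gamma:=\max_{x\in[-1,1]}|f(x)|$. Let $\ket{\psi}=\sum_{j=1}^N\psi_j\ket{j}$ with $\psi_j\in\mathbb{R}$ and $\|\ket{\psi}\|_2=1$, and let $\mathcal{N}^2:=\sum_j|f(\psi_j)|^2>0$, $\mathcal{N}_1^2:=\sum_j|P_k(\psi_j)|^2$. Let $\epsilon\in(0,1]$ and $$\Delta_k:=\Big\|\frac{1}{\mathcal{N}}\sum_j f(\psi_j)\ket{j}-\frac{1}{\mathcal{N}_1}\sum_jP_k(\psi_j)\ket{j}\Big\|_2.$$ If $\epsilon_0\le\epsilon\mathcal{N}^2/(8\gamma N)$, then $\Delta_k\le\epsilon$. *)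

(* Defs.v *)
From mathcomp Require Import all_boot all_order all_algebra.
From mathcomp Require Import complex.
Set Implicit Arguments. Unset Strict Implicit. Unset Printing Implicit Defensive.
Import Order.TTheory GRing.Theory Num.Theory.
Local Open Scope ring_scope.

Definition csq (R : rcfType) (z : R[i]) : R := complex.Re z ^+ 2 + complex.Im z ^+ 2.

Definition inI (R : rcfType) (x : R) : Prop := -1 <= x <= 1.

(* Main.v *)
Require Import Defs.
From mathcomp Require Import all_boot all_order all_algebra.
From mathcomp Require Import complex.
From mathcomp Require Import ring lra.
Import Order.TTheory GRing.Theory Num.Theory.
Local Open Scope ring_scope.
Local Open Scope complex_scope.

Lemma divC (R : rcfType) (z : R[i]) (c : R) :
  z / c%:C = (complex.Re z / c) +i* (complex.Im z / c).
Proof.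
case: z => a b /=. rewrite -fmorphV /=.
apply/eqP; rewrite eq_complex /=; apply/andP; split; apply/eqP; ring.
Qed.

Lemma csq_split (R : rcfType) (z : R[i]) (a A B: R) :
  csq (((a%:C / A%:C) - z / B%:C))%C = (a/A - complex.Re z / B)^+2 + (complex.Im z / B)^+2.
Proof.
rewrite !divC; case: z => u v /=. rewrite /csq /=. ring.
Qed.

Lemma csq_sub (R : rcfType) (z : R[i]) (a : R) :
  csq ((a%:C - z))%C = (a - complex.Re z)^+2 + (complex.Im z)^+2.
Proof. case: z => u v; rewrite /csq /=. ring. Qed.
Lemma core (R : rcfType) (A B X S d2 eps : R) :
  0 < A -> 0 < B -> 0 < eps <= 1 -> 0 <= S ->
  64 * d2 <= eps^+2 * A^+2 -> d2 = A^+2 - 2 * X + B^+2 ->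
  S * (A * B) = 2 * A * B - 2 * X -> S <= eps^+2.
Proof.
move=> A0 B0 /andP[e0 e1] S0 hd hd2 hS.
have hSAB := mulr_ge0 S0 (ltW (mulr_gt0 A0 B0)).
have hdd : (A - B)^+2 <= d2.
  rewrite hd2; have -> : (A - B)^+2 = A^+2 - 2 * A * B + B^+2 by ring.
  lra.
have he : eps^+2 <= 1.
  rewrite expr2; have := ler_pM (ltW e0) (ltW e0) e1 e1; rewrite mulr1; done.
have hA2 : 0 < A^+2 by rewrite exprn_gt0.
have hAB : 64 * (A - B)^+2 <= A^+2.
  have := ler_wpM2r (ltW hA2) he; rewrite mul1r => h. lra.
have hB : 7 * A <= 8 * B.
  rewrite leNgt; apply/negP => h.
  have h3 : A / 8 < A - B by lra.
  have h4 : 0 <= A / 8 by lra.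
  have := ltr_pM h4 h4 h3 h3. rewrite -expr2. move=> h5.
  have : A^+2 < 64 * (A - B)^+2.
    have -> : A^+2 = 64 * (A / 8)^+2 by field.
    lra.
  lra.
have h1 : S * (7 * A^+2) <= S * (8 * (A * B)).
  rewrite ler_wpM2l //. have := ler_wpM2l (ltW A0) hB. 
  have -> : A * (7 * A) = 7 * A^+2 by ring.
  have -> : A * (8 * B) = 8 * (A * B) by ring.
  done.
have h2 : 64 * (S * (A * B)) <= eps^+2 * A^+2.
  rewrite hS. have : 0 <= A^+2 - 2 * A * B + B^+2.
    have -> : A^+2 - 2 * A * B + B^+2 = (A - B)^+2 by ring.
    exact: sqr_ge0.
  lra.
have h3 : S * A^+2 <= eps^+2 * A^+2.
  move: h1.
  have -> : S * (7 * A^+2) = 7 * (S * A^+2) by ring.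
  have -> : S * (8 * (A * B)) = 8 * (S * (A * B)) by ring.
  move=> h1.
  have : S * A^+2 * 56 <= eps^+2 * A^+2 by lra.
  have : 0 <= eps^+2 * A^+2 by rewrite mulr_ge0 // sqr_ge0.
  lra.
by rewrite -(ler_pM2r hA2).
Qed.

Theorem lemma13 (R : rcfType) (f : R -> R) (eps0 : R) (k : nat)
    (P : {poly R[i]}) (gamma : R) (N : nat) (psi : 'I_N -> R) (eps : R) :
  0 < eps0 ->
  (size P).-1 = k ->
  (forall x, inI x -> Num.sqrt (csq ((f x)%:C - P.[x%:C])%C) <= eps0) ->
  (exists2 x0, inI x0 & `|f x0| = gamma) ->
  (forall x, inI x -> `|f x| <= gamma) ->
  \sum_(j < N) psi j ^+ 2 = 1 ->
  let Nsq := \sum_(j < N) f (psi j) ^+ 2 in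
  let Nsq1 := \sum_(j < N) csq P.[(psi j)%:C] in
  0 < Nsq ->
  0 < eps <= 1 ->
  eps0 <= eps * Nsq / (8 * gamma * N%:R) ->
  Num.sqrt (\sum_(j < N)
      csq (((f (psi j))%:C / (Num.sqrt Nsq)%:C)
           - P.[(psi j)%:C] / (Num.sqrt Nsq1)%:C)%C) <= eps.
Proof.
move=> e00 _ hP [x0 _ hg0] hg hpsi Nsq Nsq1 hN he heps0.
set a := fun j => f (psi j).
set u := fun j => complex.Re P.[(psi j)%:C].
set v := fun j => complex.Im P.[(psi j)%:C].
have hI : forall j, inI (psi j).
  move=> j; have : psi j ^+ 2 <= 1.
    rewrite -hpsi (bigD1 j) //= lerDl; apply: sumr_ge0 => i _; exact: sqr_ge0.
  move=> h; rewrite /inI; apply/andP; split; nra.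
have hd : forall j, (a j - u j)^+2 + v j ^+2 <= eps0^+2.
  move=> j; have := hP _ (hI j); rewrite csq_sub => h.
  have h0 : 0 <= (a j - u j)^+2 + v j ^+2 by rewrite addr_ge0 // sqr_ge0.
  rewrite -(sqr_sqrtr h0).
  apply: lerXn2r; [by rewrite nnegrE sqrtr_ge0 | by rewrite nnegrE ltW | exact: h].
have ha : forall j, a j ^+ 2 <= gamma ^+ 2.
  move=> j; rewrite -real_normK ?num_real //.
  apply: lerXn2r; rewrite ?nnegrE ?normr_ge0 //; first by rewrite -hg0 normr_ge0.
  exact: hg.
have g0 : 0 <= gamma by rewrite -hg0 normr_ge0.
set d2 := \sum_(j < N) ((a j - u j)^+2 + v j ^+2).
have hd2 : d2 <= N%:R * eps0^+2.
  rewrite /d2 (le_trans (ler_sum _ (fun j _ => hd j))) //.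
  by rewrite sumr_const card_ord mulr_natl.
have hNg : Nsq <= N%:R * gamma^+2.
  rewrite /Nsq (le_trans (ler_sum _ (fun j _ => ha j))) //.
  by rewrite sumr_const card_ord mulr_natl.
have N0 : 0 < N%:R :> R.
  rewrite ltr0n lt0n; apply/eqP => N0.
  by move: hN; rewrite /Nsq big1 ?ltxx // => -[j hj] _; have : (j < 0)%N by rewrite -N0.
have gp : 0 < gamma.
  rewrite lt_def g0 andbT; apply/eqP => g00; move: hNg; rewrite g00. 
  rewrite expr0n /= mulr0; lra.
have hD : 0 < 8 * gamma * N%:R by rewrite !mulr_gt0.
move: heps0; rewrite ler_pdivlMr // => heps0.
have hd64 : 64 * d2 <= eps^+2 * Nsq.
  case/andP: he => e0 e1.
  have h1 : eps0 * (8 * gamma) <= eps * gamma^+2.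
    have : eps * Nsq <= eps * (N%:R * gamma ^+ 2) by rewrite ler_wpM2l // ltW.
    move=> h; have : eps0 * (8 * gamma) * N%:R <= eps * gamma ^+ 2 * N%:R.
      lra.
    by rewrite ler_pM2r.
  have h2 : eps0 * (8 * gamma) * (eps0 * (8 * gamma) * N%:R) <=
            (eps * gamma^+2) * (eps * Nsq).
    have e0' := ltW e00; have g0' := ltW gp; have N0' := ltW N0.
    apply: ler_pM; [ by rewrite !mulr_ge0 | by rewrite !mulr_ge0 | exact: h1 | lra ].
  have h3 : (64 * (N%:R * eps0^+2)) * gamma^+2 <= (eps^+2 * Nsq) * gamma^+2.
    lra.
  rewrite ler_pM2r ?exprn_gt0 // in h3.
  apply: le_trans h3; lra.
case/andP: he => e0 e1.
have hA : 0 < Num.sqrt Nsq by rewrite sqrtr_gt0.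
set A := Num.sqrt Nsq in hA *.
have hA2 : A ^+ 2 = Nsq by rewrite sqr_sqrtr // ltW.
have hN1 : Nsq1 = \sum_(j < N) (u j ^+ 2 + v j ^+ 2) by [].
have hN10 : 0 <= Nsq1 by rewrite hN1 sumr_ge0 // => j _; rewrite addr_ge0 // sqr_ge0.
have [hB0|hBp] := lerP Nsq1 0.
  exfalso.
  have hz : Nsq1 = 0 by apply/eqP; rewrite eq_le hB0 hN10.
  have hz' : forall j, u j ^+ 2 + v j ^+ 2 = 0.
    move=> j; move: hz; rewrite hN1 => /psumr_eq0P H; apply: H => // i _.
    by rewrite addr_ge0 // sqr_ge0.
  have huv : forall j, u j = 0 /\ v j = 0.
    move=> j; have := hz' j; have := sqr_ge0 (u j); have := sqr_ge0 (v j) => h1 h2 h3.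
    split; apply/eqP; rewrite -sqrf_eq0; apply/eqP; lra.
  have : d2 = Nsq.
    rewrite /d2 /Nsq; apply: eq_bigr => j _; case: (huv j) => -> ->; rewrite /a; ring.
  move=> hdN; rewrite hdN in hd64.
  have : eps ^+ 2 <= 1.
    rewrite expr2; have := ler_pM (ltW e0) (ltW e0) e1 e1; rewrite mulr1; done.
  move=> he2. have := ler_wpM2r (ltW hN) he2. rewrite mul1r. lra.
have hB : 0 < Num.sqrt Nsq1 by rewrite sqrtr_gt0.
set B := Num.sqrt Nsq1 in hB *.
have hB2 : B ^+ 2 = Nsq1 by rewrite sqr_sqrtr // ltW.
set S := \sum_(j < N) ((a j / A - u j / B) ^+ 2 + (v j / B) ^+ 2).
have -> : \sum_(j < N) csq ((f (psi j))%:C / A%:C - P.[(psi j)%:C] / B%:C) = S.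
  by apply: eq_bigr => j _; rewrite csq_split.
have hS0 : 0 <= S by rewrite sumr_ge0 // => j _; rewrite addr_ge0 // sqr_ge0.
set X := \sum_(j < N) a j * u j.
have hSe : S = A^-1 ^+ 2 * Nsq + (- 2 * A^-1 * B^-1) * X + B^-1 ^+ 2 * Nsq1.
  rewrite /Nsq hN1 /X !mulr_sumr -!big_split /=; apply: eq_bigr => j _; rewrite /a; ring.
have hde : d2 = Nsq - 2 * X + Nsq1.
  rewrite /d2 /Nsq hN1 /X mulr_sumr -sumrN -!big_split /=; apply: eq_bigr => j _; rewrite /a; ring.
have hSAB : S * (A * B) = 2 * A * B - 2 * X.
  rewrite hSe -hA2 -hB2; field.
  by rewrite (gt_eqF hA) (gt_eqF hB).
have hfin : S <= eps ^+ 2.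
  apply: (@core R A B X S d2 eps hA hB _ hS0); rewrite ?e0 ?e1 //.
  - by rewrite hA2.
  - by rewrite hde hA2 hB2.
apply: le_trans (ler_wsqrtr hfin) _.
by rewrite sqrtr_sqr ger0_norm // ltW.
Qed.
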